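(* Let $v,w\in\mathfrak{S}_n$ with $v$ boolean, and fix a reduced word $s$ for $v$. Let $\mathcal{W}(v,w)$ be the set of all subwords of $s$ of the form $i(i+1)\cdots(i+j)$ or $(i+j)\cdots(i+1)i$ (with $j\ge0$) such that: in the first case, the permutation $[i(i+1)\cdots(i+j)]\not\le w$ while $[i(i+1)\cdots(i+j-1)]\le w$ and $[(i+1)(i+2)\cdots(i+j)]\le w$; in the second case, $[(i+j)\cdots(i+1)i]\not\le w$ while $[(i+j-1)\cdots(i+1)i]\le w$ and $[(i+j)\cdots(i+2)(i+1)]\le w$ (the empty word denotes the identity, which is $\le w$). Let $\mathcal{W}(v,w)^{\uparrow}$ be the set of maximal subwords of $s$ that contain no element of $\mathcal{W}(v,w)$ as a subword. Then (identifying subwords of $s$ with the permutations they represent) $\mathcal{W}(v,w)^{\uparrow}$ is exactly the set of maximal elements of $B(v)\cap B(w)$.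
   Context: $\sigma_i=(i,i+1)$; $[a_1\cdots a_k]$ denotes the permutation $\sigma_{a_1}\cdots\sigma_{a_k}$; $\le$ is the Bruhat order on $\mathfrak{S}_n$ and $B(w)=\{u:u\le w\}$. A permutation is boolean if its reduced words contain no repeated letters; then every subword of a reduced word for $v$ is itself a reduced word. *)

(* Defs.v *)
From mathcomp Require Import all_boot all_order all_fingroup.
Set Implicit Arguments.
Unset Strict Implicit.
Unset Printing Implicit Defensive.

(* Permutations of {0,...,n-1} (= {1,...,n} shifted): 'S_n. A permutation v
   is used as a function 'I_n -> 'I_n. *)

(* simple transposition sigma_i = (i, i+1) in 1-based notation, i.e. swapping
   the 0-based points i-1 and i; identity if these points don't exist. *)
Definition sigma (n i : nat) : 'S_n :=
  match [pick x : 'I_n | val x == i.-1], [pick x : 'I_n | val x == i] with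
  | Some a, Some b => tperm a b
  | _, _ => 1%g
  end.

(* [a_1 ... a_k] = sigma_{a_1} o ... o sigma_{a_k} (function composition;
   note (p * q)%g x = q (p x) in mathcomp). *)
Definition word_perm (n : nat) (s : seq nat) : 'S_n :=
  foldr (fun a p => (p * sigma n a)%g) 1%g s.

Definition valid_word (n : nat) (s : seq nat) : bool :=
  all (fun a => (0 < a < n)%N) s.

Definition perm_length (n : nat) (v : 'S_n) : nat :=
  #|[set p : 'I_n * 'I_n | (val p.1 < val p.2)%N && (val (v p.2) < val (v p.1))%N]|.

Definition reduced_word (n : nat) (v : 'S_n) (s : seq nat) : Prop :=
  valid_word n s /\ word_perm n s = v /\ size s = perm_length v.

Definition boolean_perm (n : nat) (v : 'S_n) : Prop :=
  forall s, reduced_word v s -> uniq s.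

Definition bruhat_step (n : nat) (u x : 'S_n) : bool :=
  (perm_length u < perm_length x)%N &&
  [exists a : 'I_n, exists b : 'I_n, (a != b) && (x == (tperm a b * u)%g)].

Definition bruhat_le (n : nat) (u w : 'S_n) : bool := connect (@bruhat_step n) u w.

Definition max_lower_common (n : nat) (v w u : 'S_n) : Prop :=
  bruhat_le u v /\ bruhat_le u w /\
  forall x : 'S_n, bruhat_le x v -> bruhat_le x w -> bruhat_le u x -> x = u.

Definition in_W (n : nat) (w : 'S_n) (s t : seq nat) : Prop :=
  subseq t s /\
  exists i j : nat,
    (t = iota i j.+1 /\
       ~~ bruhat_le (word_perm n (iota i j.+1)) w /\
       bruhat_le (word_perm n (iota i j)) w /\
       bruhat_le (word_perm n (iota i.+1 j)) w)
    \/
    (t = rev (iota i j.+1) /\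
       ~~ bruhat_le (word_perm n (rev (iota i j.+1))) w /\
       bruhat_le (word_perm n (rev (iota i j))) w /\
       bruhat_le (word_perm n (rev (iota i.+1 j))) w).

Definition avoids_W (n : nat) (w : 'S_n) (s t : seq nat) : Prop :=
  subseq t s /\ forall u, in_W w s u -> ~ subseq u t.

Definition in_W_up (n : nat) (w : 'S_n) (s t : seq nat) : Prop :=
  avoids_W w s t /\ forall t', avoids_W w s t' -> subseq t t' -> t' = t.

(* Main.v *)
Require Import Defs.
From mathcomp Require Import all_boot all_order all_fingroup.
From mathcomp Require Import zify.
Set Implicit Arguments.
Unset Strict Implicit.
Unset Printing Implicit Defensive.

Section Crit.
Variable n : nat.
Implicit Types (x y u w : 'S_n).

Definition D x (p q : nat) : nat := \sum_(c : 'I_n) ((c < p) && (q <= x c)).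
Definition F x (p q : nat) : nat := \sum_(c : 'I_n) ((p <= c) && (x c < q)).

Lemma DF_id x p q :
  D x p q + \sum_(c : 'I_n) (c < q : nat) = F x p q + \sum_(c : 'I_n) (c < p : nat).
Proof.
have -> : \sum_(c : 'I_n) (c < q : nat) = \sum_(c : 'I_n) (x c < q : nat).
  by rewrite (reindex_inj (@perm_inj _ x)).
rewrite /D /F -!big_split /=.
apply: eq_bigr => c _.
case: (ltnP c p) => Hc; case: (ltnP (x c) q) => Hq /=; lia.
Qed.

Lemma D_succ x (c : 'I_n) q : D x c.+1 q = D x c q + (q <= x c).
Proof.
have -> : D x c.+1 q = D x c q + \sum_(d : 'I_n) ((d == c) && (q <= x d)).
  rewrite /D -big_split /=; apply: eq_bigr => d _.
  rewrite ltnS leq_eqVlt.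
  case: (eqVneq d c) => [->|Hd]; first by rewrite eqxx ltnn /=; case: (q <= _).
  have -> : (nat_of_ord d == c) = false by apply/eqP => /val_inj E; rewrite E eqxx in Hd.
  by rewrite /=; case: (_ && _).
congr (_ + _); rewrite (bigD1 c) //= eqxx /= big1 ?addn0 // => d /negbTE ->; by [].
Qed.

Lemma D_le_of_DF u w :
  (forall p q, p <= q -> D u p q <= D w p q) ->
  (forall p q, q < p -> F u p q <= F w p q) ->
  forall p q, D u p q <= D w p q.
Proof.
move=> H1 H2 p q; case: (leqP p q) => Hpq; first exact: H1.
have := DF_id u p q; have := DF_id w p q; have := H2 p q Hpq; lia.
Qed.

Lemma F_le_of_D u w : (forall p q, D u p q <= D w p q) ->
  forall p q, F u p q <= F w p q.
Proof. move=> H p q; have := DF_id u p q; have := DF_id w p q; have := H p q; lia. Qed.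

Lemma perm_eq_of_D x y : (forall p q, D x p q = D y p q) -> x = y.
Proof.
move=> H; apply/permP => c; apply/val_inj => /=.
have E : forall q, (q <= x c) = (q <= y c).
  move=> q; have := H c.+1 q; rewrite !D_succ H.
  by case: (q <= x c); case: (q <= y c); lia.
apply/eqP; rewrite eqn_leq -E leqnn E leqnn //.
Qed.


Definition Inv x := [set p : 'I_n * 'I_n | (val p.1 < val p.2) && (val (x p.2) < val (x p.1))].

Lemma ord_eqE (i j : 'I_n) : (i == j) = (val i == val j).
Proof. by []. Qed.

Lemma pair_neq (c d a b : 'I_n) :
  (nat_of_ord c != a) || (nat_of_ord d != b) -> (c,d) != (a,b).
Proof. by apply: contraL => /eqP [-> ->]; rewrite !eqxx. Qed.

Ltac ordneq := repeat match goal with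
  | H : ~ (@eq _ ?i ?j) |- _ => let H' := fresh in
      (have H' : nat_of_ord i <> nat_of_ord j by (let E := fresh in intro E; apply: H; apply: val_inj; exact E));
      clear H end.

Lemma length_swap u (a b : 'I_n) : a < b -> u a < u b ->
  perm_length u < perm_length (tperm a b * u)%g.
Proof.
move=> Hab Hu.
set x := (tperm a b * u)%g.
have xE : forall c, x c = u (tperm a b c) by move=> c; rewrite permM.
have -> : perm_length u = #|Inv u| by [].
have -> : perm_length x = #|Inv x| by [].
pose phi (pr : 'I_n * 'I_n) := if tperm a b pr.1 < tperm a b pr.2
   then (tperm a b pr.1, tperm a b pr.2) else pr.
have inj : {in Inv u &, injective phi}.
  move=> [c d] [c' d']; rewrite !inE /= => /andP[Hcd _] /andP[Hcd' _]; rewrite /phi /=.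
  case: ifP => H1; case: ifP => H2.
  - by case=> /perm_inj-> /perm_inj->.
  - by case=> E1 E2; rewrite -E1 -E2 !tpermK Hcd in H2.
  - by case=> E1 E2; rewrite E1 E2 !tpermK Hcd' in H1.
  - by [].
have sub : phi @: Inv u \subset Inv x :\ (a,b).
  apply/subsetP => _ /imsetP[[c d] Hin ->]; rewrite !inE /= in Hin *.
  move/andP: Hin => [Hcd Hucd].
  rewrite /phi /=; case: ifP => H1.
  - rewrite /= !xE !tpermK H1 Hucd.
    apply/andP; split => //.
    apply/negP => /eqP [E1 E2].
    have Ec : c = b by rewrite -(tpermK a b c) E1 tpermL.
    have Ed : d = a by rewrite -(tpermK a b d) E2 tpermR.
    by subst; move: Hcd Hab; lia.
  - rewrite /= !xE Hcd /=; apply/andP; split; first apply: pair_neq;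
    move: H1; case: (tpermP a b c) => [Ec|Ec|Eca Ecb]; case: (tpermP a b d) => [Ed|Ed|Eda Edb];
      subst => H1; ordneq; rewrite /=;
      move: H1 Hcd Hucd Hab Hu; lia.
have Hab' : (a,b) \in Inv x by rewrite inE /= !xE tpermL tpermR Hab Hu.
rewrite -(card_in_imset inj).
apply: (leq_ltn_trans (subset_leq_card sub)).
by rewrite (cardsD1 (a,b) (Inv x)) Hab'.
Qed.


Lemma sum_ab (a b : 'I_n) (G : 'I_n -> nat) : a != b ->
  \sum_(c : 'I_n) G c = G a + G b + \sum_(c : 'I_n | (c != a) && (c != b)) G c.
Proof.
move=> ab; rewrite (bigD1 a) //= (bigD1 b) /= ?addnA //.
by rewrite eq_sym.
Qed.

Lemma D_swap u (a b : 'I_n) p q : a < b -> u a < u b ->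
  D (tperm a b * u)%g p q = D u p q + ((a < p <= b) && (u a < q <= u b)).
Proof.
move=> Hab Hu.
have ab : a != b by apply/eqP => E; rewrite E ltnn in Hab.
rewrite /D (sum_ab (fun c => (c < p) && (q <= (tperm a b * u)%g c)) ab).
rewrite (sum_ab (fun c => (c < p) && (q <= u c)) ab).
have -> : \sum_(c : 'I_n | (c != a) && (c != b)) ((c < p) && (q <= (tperm a b * u)%g c))
  = \sum_(c : 'I_n | (c != a) && (c != b)) ((c < p) && (q <= u c)).
  by apply: eq_bigr => c /andP[Ha Hb]; rewrite permM tpermD // eq_sym.
rewrite !permM tpermL tpermR.
move: (\sum_(c < n | _) _) => R.
move: Hab Hu; move: (nat_of_ord a) (nat_of_ord b) (nat_of_ord (u a)) (nat_of_ord (u b)) => a' b' ua ub.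
move=> H1 H2; case: (ltnP a' p); case: (leqP p b'); case: (leqP q ua); case: (leqP q ub);
  rewrite /=; lia.
Qed.

Lemma D_swap_le u (a b : 'I_n) p q : a < b -> u a < u b ->
  D u p q <= D (tperm a b * u)%g p q.
Proof. by move=> H1 H2; rewrite D_swap // leq_addr. Qed.

Lemma step_D u x : bruhat_step u x -> forall p q, D u p q <= D x p q.
Proof.
case/andP=> Hl /existsP[a /existsP[b /andP[ab /eqP Ex]]] p q; subst x.
wlog Hab : a b ab Hl / a < b.
  move=> W; case: (ltngtP a b) => H; first exact: W.
  - rewrite tpermC; apply: (W b a) => //; first by rewrite eq_sym.
    by rewrite tpermC.
  - by move/val_inj: H ab => ->; rewrite eqxx.
case: (ltngtP (u a) (u b)) => Hu.
- exact: D_swap_le.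
- exfalso; set z := (tperm a b * u)%g in Hl.
  have Hx : z a < z b by rewrite !permM tpermL tpermR.
  have := length_swap Hab Hx.
  have -> : (tperm a b * z)%g = u by rewrite /z mulgA -{1}(tpermV a b) mulVg mul1g.
  by move=> H; move: (ltn_trans Hl H); rewrite ltnn.
- by move/val_inj/perm_inj: Hu ab => ->; rewrite eqxx.
Qed.

Lemma bruhat_D u w : bruhat_le u w -> forall p q, D u p q <= D w p q.
Proof.
move/connectP=> [pth Hp ->]; elim: pth u Hp => [|y pth IH] u /=; first by [].
case/andP=> Hs Hp p q; apply: leq_trans (step_D Hs p q) (IH _ Hp p q).
Qed.


Lemma exists_swap u w : u != w -> (forall p q, D u p q <= D w p q) ->
  exists a b : 'I_n, [/\ a < b, u a < u b & forall p q, D (tperm a b * u)%g p q <= D w p q].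
Proof.
move=> neq Hle.
have [c0 Hc0] : exists c0, u c0 != w c0.
  case: (pickP (fun c => u c != w c)) => [c0 Hc0|H]; first by exists c0.
  exfalso; move/eqP: neq; apply; apply/permP => c; apply/eqP; move: (H c) => /negbFE.
  by [].
case: (@arg_minnP _ c0 (fun c => u c != w c) (fun c : 'I_n => val c) Hc0) => a Ha Hmin.
have Hbelow : forall c : 'I_n, c < a -> u c = w c.
  by move=> c Hc; apply/eqP; apply: contraTT Hc => /Hmin; rewrite -leqNgt.
have Dbelow : forall q, D u a q = D w a q.
  move=> q; apply: eq_bigr => c _; case: (ltnP c a) => H //=.
  by rewrite Hbelow.
have Hua : u a < w a.
  rewrite ltn_neqAle Ha /=.
  have := Hle a.+1 (u a); rewrite !D_succ Dbelow leqnn leq_add2l.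
  by case: (u a <= w a).
pose b0 := (u^-1)%g (w a).
have ub0 : u b0 = w a by rewrite /b0 permKV.
have ab0 : a < b0.
  case: (ltngtP a b0) => // H.
  - have := Hbelow b0 H; rewrite ub0 => /perm_inj E.
    by rewrite E ltnn in H.
  - by move/val_inj: H => E; move: ub0 Ha; rewrite -E => ->; rewrite eqxx.
pose Pb (c : 'I_n) := [&& a < c, u a < u c & u c <= w a].
have Pb0 : Pb b0 by rewrite /Pb ab0 ub0 Hua leqnn.
case: (@arg_minnP _ b0 Pb (fun c : 'I_n => val c) Pb0) => b /and3P[Hab Huab Hubw] Hminb.
exists a, b; split => // p q.
rewrite D_swap //.
case Hind: ((a < p <= b) && (u a < q <= u b)); last by rewrite addn0.
move/andP: Hind => [/andP[Hap Hpb] /andP[Hq1 Hq2]].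
rewrite addn1.
have qwa : q <= w a := leq_trans Hq2 Hubw.
have split : forall x, D x p q = D x p (w a).+1 + \sum_(c : 'I_n) ((c < p) && (q <= x c <= w a)).
  move=> x; rewrite /D -big_split; apply: eq_bigr => c _ /=.
  case: (c < p) => //=; move: qwa; case: (leqP (w a).+1 (x c)); case: (leqP q (x c)); 
    rewrite /=; lia.
rewrite !split.
have M : \sum_(c : 'I_n) ((c < p) && (q <= u c <= w a)) < \sum_(c : 'I_n) ((c < p) && (q <= w c <= w a)).
  rewrite (bigD1 a) //= [X in _ < X](bigD1 a) //=.
  rewrite Hap /= leqnn andbT (leqNgt q (u a)) Hq1 /= qwa.
  rewrite add0n add1n ltnS; apply: leq_sum => c Hca.
  case: (ltngtP c a) => Hc.
  - by rewrite Hbelow.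
  - case E: ((c < p) && (q <= u c <= w a)) => //.
    exfalso; move/and3P: E => [Hcp Hqc Hcw].
    have : Pb c by rewrite /Pb Hc Hcw andbT; apply: leq_trans Hq1 Hqc.
    move/Hminb => /= Hbc; move: Hcp Hpb Hbc; lia.
  - by move/val_inj: Hc Hca => ->; rewrite eqxx.
have := Hle p (w a).+1; move: M; lia.
Qed.

Definition mu x := \sum_(p < n.+1) \sum_(q < n.+1) D x p q.

Lemma mu_le u w : (forall p q, D u p q <= D w p q) -> mu u <= mu w.
Proof. by move=> H; apply: leq_sum => p _; apply: leq_sum => q _. Qed.

Lemma mu_lt u (a b : 'I_n) : a < b -> u a < u b -> mu u < mu (tperm a b * u)%g.
Proof.
move=> Hab Hu.
have pb : b < n.+1 := leqW (ltn_ord b).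
have qb : u b < n.+1 := leqW (ltn_ord (u b)).
rewrite /mu (bigD1 (Ordinal pb)) //= [X in _ < X](bigD1 (Ordinal pb)) //=.
have H2 : \sum_(p < n.+1 | p != Ordinal pb) \sum_(q < n.+1) D u p q <=
          \sum_(p < n.+1 | p != Ordinal pb) \sum_(q < n.+1) D (tperm a b * u)%g p q.
  by apply: leq_sum => p _; apply: leq_sum => q _; apply: D_swap_le.
have H1 : \sum_(q < n.+1) D u b q < \sum_(q < n.+1) D (tperm a b * u)%g b q.
  rewrite (bigD1 (Ordinal qb)) //= [X in _ < X](bigD1 (Ordinal qb)) //=.
  have H3 : \sum_(q < n.+1 | q != Ordinal qb) D u b q <=
            \sum_(q < n.+1 | q != Ordinal qb) D (tperm a b * u)%g b q.
    by apply: leq_sum => q _; apply: D_swap_le.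
  have H4 : D u b (u b) < D (tperm a b * u)%g b (u b).
    by rewrite D_swap // Hab Hu !leqnn /= addn1.
  by rewrite -addSn; apply: leq_add.
by rewrite -addSn; apply: leq_add.
Qed.

Lemma D_bruhat u w : (forall p q, D u p q <= D w p q) -> bruhat_le u w.
Proof.
move=> Hle.
suff : forall k u, mu w - mu u <= k -> (forall p q, D u p q <= D w p q) -> bruhat_le u w.
  by move/(_ _ u (leqnn _)); apply.
elim=> [|k IH] {}u Hk {}Hle; (case: (eqVneq u w) => [->|neq]; first exact: connect0);
  have [a [b [Hab Hu H']]] := exists_swap neq Hle;
  have L1 := mu_lt Hab Hu; have L2 := mu_le H'.
- by move: Hk L1 L2; lia.
- apply: (connect_trans (y := (tperm a b * u)%g)).
    apply: connect1; rewrite /bruhat_step length_swap //=.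
    apply/existsP; exists a; apply/existsP; exists b; rewrite eqxx andbT.
    by apply/eqP => E; rewrite E ltnn in Hab.
  by apply: IH => //; move: Hk L1 L2; lia.
Qed.


Lemma sigma_val (a : nat) (z : 'I_n) : 0 < a < n ->
  nat_of_ord (sigma n a z) = if nat_of_ord z == a.-1 then a else if nat_of_ord z == a then a.-1 else nat_of_ord z.
Proof.
case/andP=> a0 an; rewrite /sigma.
case: pickP => [A /eqP HA|H]; last first.
  have Hlt : a.-1 < n by lia.
  by move: (H (Ordinal Hlt)) => /=; rewrite eqxx.
case: pickP => [B /eqP HB|H]; last first.
  by move: (H (Ordinal an)) => /=; rewrite eqxx.
case: tpermP => [->|->|HzA HzB]; rewrite ?HA ?HB ?eqxx //.
- by have -> : (a == a.-1) = false by lia.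
- have h1 : val z != a.-1 by apply/eqP => E; apply: HzA; apply: val_inj; rewrite /= E HA.
  have h2 : val z != a by apply/eqP => E; apply: HzB; apply: val_inj; rewrite /= E HB.
  by rewrite (negbTE h1) (negbTE h2).
Qed.

Lemma sig_ge a q (v : 'I_n) : 0 < a < n -> q != a ->
  (q <= sigma n a v) = (q <= v).
Proof.
move=> Ha Hq; rewrite sigma_val //; move: Ha Hq.
by case: ifP => /eqP H1; [|case: ifP => /eqP H2]; lia.
Qed.

Lemma sig_ge_a a (v : 'I_n) : 0 < a < n ->
  (a <= sigma n a v) = (a < v) || (nat_of_ord v == a.-1).
Proof.
move=> Ha; rewrite sigma_val //; move: Ha.
by case: ifP => /eqP H1; [|case: ifP => /eqP H2]; lia.
Qed.

Lemma sig_lt a q (v : 'I_n) : 0 < a < n -> q != a ->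
  (sigma n a v < q) = (v < q).
Proof. by move=> Ha Hq; rewrite !ltnNge sig_ge. Qed.

Lemma sig_lt_a a (v : 'I_n) : 0 < a < n ->
  (sigma n a v < a) = (v.+1 < a) || (nat_of_ord v == a).
Proof.
move=> Ha; rewrite sigma_val //; move: Ha.
by case: ifP => /eqP H1; [|case: ifP => /eqP H2]; lia.
Qed.

Lemma wp_consE a t (c : 'I_n) : word_perm n (a :: t) c = sigma n a (word_perm n t c).
Proof. by rewrite /= permM. Qed.

Lemma chain_cons p q : p <= q -> rev (iota p (q - p).+1) = q :: rev (iota p (q - p)).
Proof. by move=> pq; rewrite -addn1 iotaD rev_cat /= subnKC. Qed.

Lemma sum_eq0P (G : 'I_n -> bool) : \sum_(c : 'I_n) (G c : nat) = 0 -> forall c, G c = false.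
Proof.
move/eqP; rewrite sum_nat_eq0 => /forallP H c.
by move: (H c); case: (G c).
Qed.

Lemma D_wp t : uniq t -> valid_word n t -> forall p q, p <= q ->
  D (word_perm n t) p q = subseq (rev (iota p (q - p).+1)) t.
Proof.
elim: t => [|a t IH] /=.
  move=> _ _ p q pq; rewrite (chain_cons pq) /= /D big1 // => c _.
  by rewrite perm1; case: (ltnP c p) => //= H; apply/eqP; rewrite eqb0 -ltnNge; lia.
move=> /andP[anot ut] /andP[Ha vt] p q pq.
rewrite (chain_cons pq) /=.
case: (eqVneq q a) => [Eqa|Nqa]; last first.
  rewrite -(chain_cons pq) -IH //; apply: eq_bigr => c _.
  by rewrite wp_consE sig_ge.
subst q.
have D0 : D (word_perm n t) p a = 0.
  rewrite IH // (chain_cons pq).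
  have -> : subseq (a :: rev (iota p (a - p))) t = false; last by [].
  apply/negbTE; apply: contra anot => /mem_subseq; apply.
  by rewrite inE eqxx.
have H0 := sum_eq0P D0.
have E1 : D (word_perm n (a :: t)) p a =
          \sum_(c : 'I_n) ((c < p) && (nat_of_ord (word_perm n t c) == a.-1)).
  apply: eq_bigr => c _; rewrite wp_consE sig_ge_a //.
  move: (H0 c); case: (c < p) => //=; move=> h; have -> : (a < word_perm n t c) = false by move: h; apply: contraFF => /ltnW.
  by [].

rewrite E1.
case: (ltnP p a) => pa.
  have -> : a - p = (a.-1 - p).+1 by lia.
  rewrite -IH //; last by lia.
  apply: eq_bigr => c _; move: (H0 c); case: (c < p) => //=.
  by move: Ha; case: (leqP a (word_perm n t c)) => //; lia.
have Epa : p = a by lia.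
subst p; rewrite subnn /= sub0seq.
have F0 : F (word_perm n t) a a = 0 by have := DF_id (word_perm n t) a a; rewrite D0; lia.
have G0 := sum_eq0P F0.
have Hlt : a.-1 < n by lia.
pose c0 := ((word_perm n t)^-1)%g (Ordinal Hlt).
have yc0 : word_perm n t c0 = Ordinal Hlt by rewrite /c0 permKV.
rewrite (bigD1 c0) //= big1 ?addn0.
  rewrite yc0 /= eqxx andbT; move: (G0 c0); rewrite yc0 /=.
  by case: (ltnP c0 a) => //=; lia.
move=> c Hc; apply/eqP; rewrite eqb0; apply/negP => /andP[_ /eqP E].
have : word_perm n t c = Ordinal Hlt by apply: val_inj.
by rewrite -yc0 => /perm_inj E'; rewrite E' eqxx in Hc.
Qed.


Lemma F_wp t : uniq t -> valid_word n t -> forall p q, q < p ->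
  F (word_perm n t) p q = subseq (iota q (p - q).+1) t.
Proof.
elim: t => [|a t IH] /=.
  move=> _ _ p q pq; rewrite /F big1 // => c _.
  by rewrite perm1; case: (leqP p c) => //= H; apply/eqP; rewrite eqb0 -leqNgt; lia.
move=> /andP[anot ut] /andP[Ha vt] p q pq.
have ut' : uniq t := ut.
case: (eqVneq q a) => [Eqa|Nqa]; last first.
  rewrite /=; transitivity (F (word_perm n t) p q); last exact: IH.
  by apply: eq_bigr => c _; rewrite permM sig_lt.
subst q; rewrite /= ?eqxx.
have F0 : F (word_perm n t) p a = 0.
  rewrite IH //.
  have -> : subseq (iota a (p - a).+1) t = false; last by [].
  apply/negbTE; apply: contra anot => /mem_subseq; apply.
  by rewrite inE eqxx.
have H0 := sum_eq0P F0.
have E1 : F (word_perm n (a :: t)) p a =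
          \sum_(c : 'I_n) ((p <= c) && (nat_of_ord (word_perm n t c) == a)).
  apply: eq_bigr => c _; rewrite wp_consE sig_lt_a //.
  move: (H0 c); case: (p <= c) => //=; move=> h.
  have -> : ((word_perm n t c).+1 < a) = false by move: h; apply: contraFF => /ltnW.
  by [].
have E2 : (subseq (iota a.+1 (p - a)) t : nat) = F (word_perm n t) p a.+1.
  case: (ltnP a.+1 p) => h.
    by rewrite IH // ; congr (subseq (iota _ _) _); lia.
  have Ep : p = a.+1 by lia.
  subst p; rewrite subSnn.
  have := DF_id (word_perm n t) a.+1 a.+1.
  rewrite D_wp // subnn /= => E.
  have E3 : rev [:: a.+1] = [:: a.+1] by [].
  rewrite E3 in E; apply/eqP; rewrite -(eqn_add2r (\sum_(c < n) (c < a.+1 : nat))) E.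
  by [].
rewrite E1 E2; apply: eq_bigr => c _.
move: (H0 c); case: (p <= c) => //= h.
by rewrite ltnS leq_eqVlt; move: h; case: (ltnP (word_perm n t c) a) => //; rewrite orbF.
Qed.


Lemma sum_gt0P (G : 'I_n -> bool) : 0 < \sum_(c : 'I_n) (G c : nat) -> exists c, G c.
Proof.
case: (pickP G) => [c Hc|H]; first by exists c.
by rewrite big1 // => c _; rewrite H.
Qed.

Lemma sum_gt0 (G : 'I_n -> bool) c : G c -> 0 < \sum_(c : 'I_n) (G c : nat).
Proof. by move=> Hc; rewrite (bigD1 c) //= Hc. Qed.

Lemma valid_sub (t t' : seq nat) : valid_word n t' -> subseq t t' -> valid_word n t.
Proof.
move=> /allP H Hs; apply/allP => x Hx; apply: H; exact: (mem_subseq Hs).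
Qed.

Lemma cd_uniq p q : uniq (rev (iota p (q - p).+1)).
Proof. by rewrite rev_uniq iota_uniq. Qed.

Lemma ci_uniq p q : uniq (iota q (p - q).+1).
Proof. by rewrite iota_uniq. Qed.

Lemma b2n_le (b1 b2 : bool) : (b1 -> b2) -> (b1 : nat) <= b2.
Proof. by case: b1; case: b2 => // /(_ isT). Qed.

Lemma wp_le (t t' : seq nat) : uniq t' -> valid_word n t' -> subseq t t' ->
  bruhat_le (word_perm n t) (word_perm n t').
Proof.
move=> ut' vt' Hs.
have ut := subseq_uniq Hs ut'; have vt := valid_sub vt' Hs.
apply: D_bruhat; apply: D_le_of_DF => p q pq.
- by rewrite !D_wp //; apply: b2n_le => H; apply: subseq_trans H Hs.
- by rewrite !F_wp //; apply: b2n_le => H; apply: subseq_trans H Hs.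
Qed.

Lemma chains_suffice (t : seq nat) w : uniq t -> valid_word n t ->
  (forall p q, p <= q -> subseq (rev (iota p (q - p).+1)) t ->
      bruhat_le (word_perm n (rev (iota p (q - p).+1))) w) ->
  (forall p q, q < p -> subseq (iota q (p - q).+1) t ->
      bruhat_le (word_perm n (iota q (p - q).+1)) w) ->
  bruhat_le (word_perm n t) w.
Proof.
move=> ut vt H1 H2.
apply: D_bruhat; apply: D_le_of_DF => p q pq.
- rewrite D_wp //; case E: (subseq _ t) => //=.
  have := bruhat_D (H1 p q pq E) p q.
  by rewrite D_wp ?subseq_refl ?cd_uniq //; apply: valid_sub vt E.
- rewrite F_wp //; case E: (subseq _ t) => //=.
  have := F_le_of_D (bruhat_D (H2 p q pq E)) p q.
  by rewrite F_wp ?subseq_refl ?ci_uniq //; apply: valid_sub vt E.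
Qed.

Lemma cd_diag p : rev (iota p (p - p).+1) = [:: p].
Proof. by rewrite subnn. Qed.

Lemma wp_le_inv (t t' s : seq nat) : uniq s -> valid_word n s -> subseq t s -> subseq t' s ->
  bruhat_le (word_perm n t) (word_perm n t') -> subseq t t'.
Proof.
move=> us vs Ht Ht' Hle.
have ut := subseq_uniq Ht us; have vt := valid_sub vs Ht.
have ut' := subseq_uniq Ht' us; have vt' := valid_sub vs Ht'.
have Hm : {subset t <= t'}.
  move=> x Hx; have := bruhat_D Hle x x.
  rewrite !D_wp // !cd_diag !sub1seq Hx.
  by case: (x \in t').
rewrite (elimT (subseq_uniqP us) Ht') subseq_filter Ht andbT.
by apply/allP.
Qed.

Lemma no_both (s : seq nat) a b : uniq s -> subseq [:: a; b] s -> subseq [:: b; a] s -> a = b.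
Proof.
move=> us /(subseq_uniqP us) E1 /(subseq_uniqP us) E2.
have : [:: a; b] = [:: b; a].
  rewrite E1 E2; apply: eq_filter => x; by rewrite !inE orbC.
by case.
Qed.


Lemma rev_iotaS p k : rev (iota p k.+1) = (p + k) :: rev (iota p k).
Proof. by rewrite -addn1 iotaD rev_cat. Qed.

Lemma iotaS_r q k : iota q k.+1 = rcons (iota q k) (q + k).
Proof. by rewrite -addn1 iotaD cats1. Qed.

Lemma below_sub (x : 'S_n) (s : seq nat) : uniq s -> valid_word n s ->
  bruhat_le x (word_perm n s) -> exists t, subseq t s /\ x = word_perm n t.
Proof.
move=> us vs Hle.
have HD := bruhat_D Hle; have HF := F_le_of_D HD.
pose P := fun a => 0 < D x a a.
pose t := [seq a <- s | P a].
have ts : subseq t s := filter_subseq _ _.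
have ut := subseq_uniq ts us; have vt := valid_sub vs ts.
have DF_diag : forall k, D x k k = F x k k by move=> k; have := DF_id x k k; lia.
have memt : forall k, (k \in t) = (0 < D x k k) && (k \in s) by move=> k; rewrite mem_filter.
have Hec : forall e c : 'I_n, (x e : nat) = x c -> (e : nat) = c by move=> e c /val_inj/perm_inj ->.
have Hec2 : forall e c : 'I_n, (e : nat) = c -> (x e : nat) = x c by move=> e c /val_inj ->.
have A1 : forall p q, p <= q -> 0 < D x p q -> subseq (rev (iota p (q - p).+1)) t.
  move=> p q pq Hpos.
  have Hs : subseq (rev (iota p (q - p).+1)) s.
    apply/negPn/negP => E; have := HD p q; rewrite D_wp // (negbTE E); move: Hpos; lia.
  rewrite subseq_filter Hs andbT; apply/allP => k; rewrite mem_rev mem_iota => /andP[Hk1 Hk2].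
  have [c /andP[Hc1 Hc2]] := sum_gt0P Hpos.
  rewrite /P /D; apply: (@sum_gt0 _ c) => /=; apply/andP; split; lia.
have A2 : forall k p, subseq (rev (iota p k.+1)) t -> 0 < D x p (p + k).
  elim=> [|k IH] p.
    by rewrite addn0 /= sub1seq memt => /andP[].
  rewrite rev_iotaS => Hsub.
  have Hsub' := cons_subseq Hsub.
  have [c /andP[Hc1 Hc2]] := sum_gt0P (IH p Hsub').
  have Hm : p + k.+1 \in t by apply: (mem_subseq Hsub); rewrite inE eqxx.
  move: Hm; rewrite memt DF_diag => /andP[Hd _].
  have [e /andP[He1 He2]] := sum_gt0P Hd.
  have Hpair : subseq [:: p + k.+1; p + k] s.
    apply: subseq_trans _ (subseq_trans Hsub ts).
    by rewrite rev_iotaS /= !eqxx sub0seq.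
  have F0 : F x (p + k.+1) (p + k) = 0.
    have := HF (p + k.+1) (p + k); rewrite F_wp //; last by lia.
    have -> : subseq (iota (p + k) (p + k.+1 - (p + k)).+1) s = false.
      apply/negP => Hs2.
      have Hs3 : subseq [:: p + k; p + k.+1] s.
        have E3 : iota (p + k) (p + k.+1 - (p + k)).+1 = [:: p + k; p + k.+1].
          by rewrite addnS subSnn.
        by rewrite -E3.
      by have := no_both us Hs3 Hpair; lia.
    by move=> H; apply/eqP; rewrite -leqn0.
  have Hxe := sum_eq0P F0 e; rewrite /= He1 /= in Hxe.
  apply: (@sum_gt0 _ c) => /=; apply/andP; split; first by lia.
  have := Hec e c; move: Hxe He1 He2 Hc1 Hc2; lia.
have A : forall p q, p <= q -> D x p q = subseq (rev (iota p (q - p).+1)) t.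
  move=> p q pq.
  have Hle1 : D x p q <= 1.
    by have := HD p q; rewrite D_wp // => H; apply: leq_trans H _; case: (subseq _ _).
  case E: (subseq _ t).
    by have := A2 (q - p) p E; rewrite subnKC //; move: Hle1; lia.
  case: (posnP (D x p q)) => // Hpos.
  by rewrite (A1 p q pq Hpos) in E.
have B1 : forall p q, q < p -> 0 < F x p q -> subseq (iota q (p - q).+1) t.
  move=> p q pq Hpos.
  have Hs : subseq (iota q (p - q).+1) s.
    apply/negPn/negP => E; have := HF p q; rewrite F_wp // (negbTE E); move: Hpos; lia.
  rewrite subseq_filter Hs andbT; apply/allP => k; rewrite mem_iota => /andP[Hk1 Hk2].
  have [e /andP[He1 He2]] := sum_gt0P Hpos.
  rewrite /P DF_diag /F; apply: (@sum_gt0 _ e) => /=; apply/andP; split; lia.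
have B2 : forall k q, subseq (iota q k.+1) t -> 0 < F x (q + k) q.
  elim=> [|k IH] q.
    by rewrite addn0 /= sub1seq memt -DF_diag => /andP[].
  rewrite iotaS_r => Hsub.
  have Hsub' := subseq_trans (subseq_rcons _ _) Hsub.
  have [e /andP[He1 He2]] := sum_gt0P (IH q Hsub').
  have Hm : q + k.+1 \in t by apply: (mem_subseq Hsub); rewrite mem_rcons inE eqxx.
  move: Hm; rewrite memt => /andP[Hd _].
  have [c /andP[Hc1 Hc2]] := sum_gt0P Hd.
  have Hpair : subseq [:: q + k; q + k.+1] s.
    apply: subseq_trans _ (subseq_trans Hsub ts).
    rewrite -iotaS_r -addn2 iotaD /= -addnS.
    exact: suffix_subseq.
  have D0 : D x (q + k) (q + k.+1) = 0.
    have := HD (q + k) (q + k.+1); rewrite D_wp //; last by lia.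
    have -> : subseq (rev (iota (q + k) (q + k.+1 - (q + k)).+1)) s = false.
      apply/negP => Hs2.
      have Hs3 : subseq [:: q + k.+1; q + k] s.
        have E3 : rev (iota (q + k) (q + k.+1 - (q + k)).+1) = [:: q + k.+1; q + k].
          by rewrite addnS subSnn.
        by rewrite -E3.
      by have := no_both us Hs3 Hpair; lia.
    by move=> H; apply/eqP; rewrite -leqn0.
  have Hxc := sum_eq0P D0 c; rewrite /= Hc2 andbT in Hxc.
  apply: (@sum_gt0 _ e) => /=; apply/andP; split; last by lia.
  have := Hec2 e c; move: Hxc He1 He2 Hc1 Hc2; lia.
have B : forall p q, q < p -> F x p q = subseq (iota q (p - q).+1) t.
  move=> p q pq.
  have Hle1 : F x p q <= 1.
    by have := HF p q; rewrite F_wp // => H; apply: leq_trans H _; case: (subseq _ _).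
  case E: (subseq _ t).
    have := B2 (p - q) q E; rewrite subnKC; last exact: ltnW.
    by move: Hle1; lia.
  case: (posnP (F x p q)) => // Hpos.
  by rewrite (B1 p q pq Hpos) in E.
exists t; split => //.
apply: perm_eq_of_D => p q.
case: (leqP p q) => pq; first by rewrite A // D_wp.
have := DF_id x p q; have := DF_id (word_perm n t) p q.
rewrite B // F_wp //; lia.
Qed.

End Crit.


Section Main.
Variables (n : nat) (w : 'S_n) (s : seq nat).
Hypotheses (us : uniq s) (vs : valid_word n s).

Lemma bruhat1 : bruhat_le (word_perm n [::]) w.
Proof.
apply: chains_suffice => // p q _; rewrite subseq0 //.
by rewrite rev_iotaS.
Qed.

Lemma min_fail_inc t : subseq t s -> forall j i, subseq (iota i j.+1) t ->
  ~~ bruhat_le (word_perm n (iota i j.+1)) w -> exists u, in_W w s u /\ subseq u t.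
Proof.
move=> ts; elim=> [|j IH] i Hsub Hfail.
  exists (iota i 1); split => //; split; first exact: subseq_trans Hsub ts.
  by exists i, 0; left; split => //; split => //; split; exact: bruhat1.
case H1: (bruhat_le (word_perm n (iota i j.+1)) w); last first.
  apply: (IH i) => //; last by rewrite H1.
  by apply: subseq_trans Hsub; rewrite (iotaS_r i j.+1); exact: subseq_rcons.
case H2: (bruhat_le (word_perm n (iota i.+1 j.+1)) w); last first.
  apply: (IH i.+1) => //; last by rewrite H2.
  by apply: subseq_trans Hsub; exact: subseq_cons.
exists (iota i j.+2); split => //; split; first exact: subseq_trans Hsub ts.
by exists i, j.+1; left.
Qed.

Lemma min_fail_dec t : subseq t s -> forall j i, subseq (rev (iota i j.+1)) t ->
  ~~ bruhat_le (word_perm n (rev (iota i j.+1))) w -> exists u, in_W w s u /\ subseq u t.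
Proof.
move=> ts; elim=> [|j IH] i Hsub Hfail.
  exists (rev (iota i 1)); split => //; split; first exact: subseq_trans Hsub ts.
  by exists i, 0; right; split => //; split => //; split; exact: bruhat1.
case H1: (bruhat_le (word_perm n (rev (iota i j.+1))) w); last first.
  apply: (IH i) => //; last by rewrite H1.
  by apply: subseq_trans Hsub; rewrite (rev_iotaS i j.+1); exact: subseq_cons.
case H2: (bruhat_le (word_perm n (rev (iota i.+1 j.+1))) w); last first.
  apply: (IH i.+1) => //; last by rewrite H2.
  apply: subseq_trans Hsub; rewrite [iota i j.+2]/= rev_cons; exact: subseq_rcons.
exists (rev (iota i j.+2)); split => //; split; first exact: subseq_trans Hsub ts.
by exists i, j.+1; right.
Qed.

Lemma avoid_iff t : subseq t s -> (avoids_W w s t <-> bruhat_le (word_perm n t) w).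
Proof.
move=> ts.
have ut := subseq_uniq ts us; have vt := valid_sub vs ts.
split.
- move=> [_ Hav]; apply: chains_suffice => //.
  + move=> p q pq Hc; apply/negPn/negP => Hf.
    have [u [HuW Hut]] := min_fail_dec ts Hc Hf.
    exact: Hav u HuW Hut.
  + move=> p q pq Hc; apply/negPn/negP => Hf.
    have [u [HuW Hut]] := min_fail_inc ts Hc Hf.
    exact: Hav u HuW Hut.
- move=> Hle; split => // u [Hus [i [j [[-> [Hn _]] | [-> [Hn _]]]]]] Hsub;
    by move/negP: Hn; apply; apply: connect_trans (wp_le ut vt Hsub) Hle.
Qed.

End Main.

Unset Implicit Arguments.

Theorem proposition3p7 (n : nat) (v w : 'S_n) (s : seq nat) :
  boolean_perm v -> reduced_word v s ->
  forall u : 'S_n,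
    (exists t, in_W_up w s t /\ word_perm n t = u) <-> max_lower_common v w u.
Proof.
move=> Hbool Hred u.
have us : uniq s := Hbool s Hred.
case: Hred => vs [Ev _]; subst v.
split.
- move=> [t [[Hav Hmax] <-]].
  have ts : subseq t s := Hav.1.
  split; first exact: wp_le us vs ts.
  split; first exact: (avoid_iff w us vs ts).1 Hav.
  move=> x Hxv Hxw Hux.
  have [t' [t's Ex]] := below_sub us vs Hxv; subst x.
  have Hav' : avoids_W w s t' := (avoid_iff w us vs t's).2 Hxw.
  have tt' : subseq t t' := wp_le_inv us vs ts t's Hux.
  by rewrite (Hmax t' Hav' tt').
- move=> [Huv [Huw Hmax]].
  have [t [ts Eu]] := below_sub us vs Huv; subst u.
  exists t; split => //; split; first exact: (avoid_iff w us vs ts).2 Huw.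
  move=> t' Hav' tt'.
  have t's : subseq t' s := Hav'.1.
  have Hle' := (avoid_iff w us vs t's).1 Hav'.
  have E := Hmax _ (wp_le us vs t's) Hle' (wp_le (subseq_uniq t's us) (valid_sub vs t's) tt').
  have t't : subseq t' t by apply: (wp_le_inv us vs t's ts); rewrite E; exact: connect0.
  by apply: subseq_anti; rewrite t't tt'.
Qed.
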